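(* Let $k$ be a positive integer, $G$ a graph and $K$ a subgraph of $G$ with the following property: for every $s\ge1$, every cover $H$ of $G$ with respect to $L(v)=\{1,\dots,s\}$ for all $v$, and every $F=(f_1,\dots,f_s)$ with $f_i:V(G)\to\mathbb{Z}_{\ge0}$ and $|f(v)|\ge k$ for every vertex $v$, each DP-$F$-coloring of $K$ (with respect to the restriction of $H$ to the vertices over $V(K)$) can be extended to a DP-$F$-coloring of $(G,H)$. Let $H$ and $F$ be such a cover and such a function, and let $R_1$ be a DP-$F$-coloring of $K$. Then there exists a DP-$F$-coloring of $(G,H)$ with a strictly $F$-degenerate order $S$ such that the $|R_1|$ lowest-ordered elements of $S$ are the elements of $R_1$.
   Context: $|f(v)|=f_1(v)+\cdots+f_s(v)$. A cover $H$ of $G$ w.r.t. $L$ has vertex set $\{(u,c):c\in L(u)\}$, each $\{u\}\times L(u)$ is a clique, for each edge $uv$ the edges between $\{u\}\times L(u)$ and $\{v\}\times L(v)$ form a matching, and there are no such edges for non-adjacent $u,v$. A representative set contains exactly one vertex of each $\{v\}\times L(v)$. A DP-$F$-coloring is a representative set $R$ together with an ordering of $R$ (a strictly $F$-degenerate order) in which each $(v,i)\in R$ has fewer than $f_i(v)$ $H$-neighbors among earlier elements of $R$; extending a coloring means finding a DP-$F$-coloring of $(G,H)$ containing it. *)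

(* Defs.v *)
From mathcomp Require Import all_boot.
Set Implicit Arguments. Unset Strict Implicit. Unset Printing Implicit Defensive.

Definition simple_graph (T : finType) (e : rel T) : Prop :=
  symmetric e /\ irreflexive e.

Definition subgraph (T : finType) (e : rel T) (VK : {set T}) (eK : rel T) : Prop :=
  (forall u v, eK u v -> [&& u \in VK, v \in VK & e u v]) /\ symmetric eK.

(* A cover H of G with respect to the list assignment L(v) = {1,...,s}
   (the colours are represented by 'I_s).  The vertex (u, c) of H
   corresponds to the pair (u,c) with c \in L(u). *)
Definition is_cover (T : finType) (e : rel T) (s : nat) (H : rel (T * 'I_s)) : Prop :=
  [/\ symmetric H, irreflexive H,
      (forall u (c d : 'I_s), c != d -> H (u, c) (u, d)),
      (forall u v (c d1 d2 : 'I_s), u != v -> H (u, c) (v, d1) -> H (u, c) (v, d2) -> d1 = d2) &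
      (forall u v (c d : 'I_s), u != v -> ~~ e u v -> ~~ H (u, c) (v, d))].

Definition fsize (T : finType) (s : nat) (F : 'I_s -> T -> nat) (v : T) : nat :=
  \sum_(i < s) F i v.

(* A DP-F-coloring of the vertices in D (with respect to the cover H restricted
   to the vertices over D) is a representative set R of the fibres over D
   together with a strictly F-degenerate order of R; we represent it by the
   duplicate-free sequence S listing R in that order. *)
Definition DPF_coloring (T : finType) (s : nat) (H : rel (T * 'I_s))
    (F : 'I_s -> T -> nat) (D : {set T}) (S : seq (T * 'I_s)) : Prop :=
  [/\ uniq S,
      (forall x, x \in S -> x.1 \in D),
      (forall v, v \in D -> count (fun x => x.1 == v) S = 1) &
      (forall p x q, S = p ++ x :: q -> count (H x) p < F x.2 x.1)].

(* Main.v *)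
Require Import Defs.
From mathcomp Require Import all_boot.
Set Implicit Arguments. Unset Strict Implicit. Unset Printing Implicit Defensive.

Lemma split_ex (X : eqType) (z : X) (s : seq X) : z \in s -> exists p q, s = p ++ z :: q.
Proof. by case/splitPr => p q; exists p, q. Qed.

Lemma count_split (X : Type) (P a : pred X) (s : seq X) :
  count P s = count P (filter a s) + count P (filter (predC a) s).
Proof.
elim: s => //= z s ->; case: (a z) => /=; case: (P z) => /=; 
  rewrite ?addnS ?addSn //.
Qed.

Lemma count_bef (X : eqType) (H : rel X) (S p q : seq X) x :
  uniq S -> S = p ++ x :: q ->
  count (H x) p = count (fun z => H x z && (index z S < index x S)) S.
Proof.
move=> uS E.
have xnp : x \notin p by move: uS; rewrite E cat_uniq /= => /and3P [_ /norP [] ] //.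
have ix : index x S = size p by rewrite E index_cat (negbTE xnp) /= eqxx addn0.
have cS : forall P, count P S = count P (p ++ x :: q) by move=> P; rewrite -E.
rewrite ix cS count_cat.
have -> : count (fun z => H x z && (index z S < size p)) (x :: q) = 0.
  apply/eqP; rewrite -leqn0 leqNgt -has_count; apply/hasPn => z zq /=.
  case: (H x z) => //=; rewrite -leqNgt E index_cat.
  case: ifP => [zp|_]; last by apply: leq_addr.
  move: uS; rewrite E cat_uniq => /and3P [_ /hasPn /(_ z zq) /= ] .
  by rewrite zp.
rewrite addn0; apply: eq_in_count => z zp /=.
have -> : index z S < size p by rewrite E index_cat zp index_mem.
by rewrite andbT.
Qed.

Lemma idx_filter (X : eqType) (a : pred X) (s : seq X) w y :
  uniq s -> w \in s -> y \in s -> a w -> a y ->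
  (index w (filter a s) < index y (filter a s)) = (index w s < index y s).
Proof.
elim: s => //= z s IH /andP [zs us].
rewrite !inE => ws ys aw ay.
case: (eqVneq z w) => [E|zw].
  subst z; rewrite aw /= eqxx /=.
  case: (eqVneq w y) => [E|zy]; first by subst y; rewrite ltnn.
  by [].
case: (eqVneq z y) => [E|zy].
  by subst z; rewrite ay /= eqxx (negbTE zw).
move: ws ys; rewrite eq_sym (negbTE zw) eq_sym (negbTE zy) /= => ws ys.
case: (a z) => /=; rewrite ?(negbTE zw) ?(negbTE zy) ?ltnS IH //.
Qed.

Lemma idx_map (X Y : eqType) (f : X -> Y) (s : seq X) w :
  {in s &, injective f} -> w \in s -> index (f w) (map f s) = index w s.
Proof.
elim: s => //= z s IH inj; rewrite inE => /predU1P [->|ws]; first by rewrite !eqxx.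
case: (eqVneq z w) => [->|zw]; first by rewrite !eqxx.
have -> : (f z == f w) = false.
  apply/negbTE/eqP => E; move/eqP: zw; apply; apply: inj => //; rewrite inE ?eqxx ?ws ?orbT //.
rewrite IH // => u v us vs; apply: inj; rewrite inE ?us ?vs orbT //.
Qed.
Lemma fibre_eq (X : finType) (s : nat) (S : seq (X * 'I_s)) (D : {set X}) a b :
  uniq S -> (forall v, v \in D -> count (fun x => x.1 == v) S = 1) ->
  a \in S -> b \in S -> a.1 \in D -> a.1 = b.1 -> a = b.
Proof.
move=> uS cnt aS bS aD ab; case: (eqVneq a b) => // nab; exfalso.
have := cnt _ aD.
have : 2 <= count (fun x => x.1 == a.1) S.
  rewrite -size_filter; apply: (uniq_leq_size (s1 := [:: a; b])).
    by rewrite /= inE nab.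
  move=> z; rewrite !inE mem_filter => /orP [] /eqP ->; rewrite ?ab eqxx ?aS ?bS //.
by move=> le E; rewrite E in le.
Qed.

Theorem lemma5 (k : nat) (T : finType) (e : rel T) (VK : {set T}) (eK : rel T) :
  0 < k -> simple_graph e -> subgraph e VK eK ->
  (forall (s : nat) (H : rel (T * 'I_s)) (F : 'I_s -> T -> nat),
     0 < s -> is_cover e H -> (forall v, k <= fsize F v) ->
     forall R1, DPF_coloring H F VK R1 ->
       exists R2, DPF_coloring H F [set: T] R2 /\ {subset R1 <= R2}) ->
  forall (s : nat) (H : rel (T * 'I_s)) (F : 'I_s -> T -> nat),
    0 < s -> is_cover e H -> (forall v, k <= fsize F v) ->
    forall R1, DPF_coloring H F VK R1 ->
      exists S, DPF_coloring H F [set: T] S /\ perm_eq (take (size R1) S) R1.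
Proof.
move=> k0 _ _ Hyp s H F s0 cov Fk R1 [uR1 inVK cnt1 deg1].
case: cov => symH irrH cliqH matH nadjH.
pose d0 : 'I_s := Ordinal s0.
pose emb := fun x : T * 'I_s => (x.1, widen_ord (leqnSn s) x.2).
pose back := fun x : T * 'I_s.+1 => (x.1, insubd d0 (val x.2)).
have backK : forall x, back (emb x) = x.
  by case=> v c; rewrite /back /emb /=; congr pair; apply: val_inj; rewrite val_insubd /= ltn_ord.
have embK : forall y, val y.2 < s -> emb (back y) = y.
  by case=> v c /= cs; rewrite /back /emb /=; congr pair; apply: val_inj; rewrite /= val_insubd cs.
have embold : forall x, val (emb x).2 < s by case=> v c /=.
pose H'' : rel (T * 'I_s.+1) := fun a b =>
  if (val a.2 < s) && (val b.2 < s) then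
    H (back a) (back b) && ~~ [&& back a \in R1, back b \in R1 & a.1 != b.1]
  else (a.1 == b.1) && (a.2 != b.2).
pose F'' : 'I_s.+1 -> T -> nat := fun c v =>
  if val c < s then (if (v, insubd d0 (val c)) \in R1 then 1 else F (insubd d0 (val c)) v)
  else (if v \in VK then k else 0).
pose R1'' := map emb R1.
have cov'' : is_cover e H''.
  split.
  - move=> a b; rewrite /H''; case: (val a.2 < s); case: (val b.2 < s) => /=;
      rewrite ?(eq_sym a.1) ?(eq_sym a.2) //.
    by rewrite symH; case: (back a \in R1); case: (back b \in R1).
  - by move=> a; rewrite /H''; case: ifP => _; [rewrite irrH | rewrite !eqxx].
  - move=> u c d cd; rewrite /H'' /=; case: ifP => [/andP [cs ds]|_]; last by rewrite eqxx cd.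
    rewrite eqxx !andbF andbT; apply: cliqH; apply/eqP => E; move/eqP: cd; apply; apply: val_inj.
    by have := congr1 val E; rewrite !val_insubd cs ds.
  - move=> u v c d1 d2 uv; rewrite /H'' /=.
    case: ifP => [/andP [cs d1s]|_]; last by rewrite (negbTE uv).
    case/andP => h1 _.
    case: ifP => [/andP [_ d2s]|_]; last by rewrite (negbTE uv).
    case/andP => h2 _.
    have := matH _ _ _ _ _ uv h1 h2 => /(congr1 val); rewrite !val_insubd d1s d2s => E.
    exact: val_inj.
  - move=> u v c d uv nuv; rewrite /H'' /=; case: ifP => _; last by rewrite (negbTE uv).
    by rewrite (negbTE (nadjH _ _ _ _ uv nuv)).
have F''k : forall v, k <= fsize F'' v.
  move=> v; rewrite /fsize big_ord_recr /=.
  rewrite {2}/F'' /= ltnn; case: ifP => vK; first by rewrite leq_addl.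
  rewrite addn0.
  have -> : \sum_(i < s) F'' (widen_ord (leqnSn s) i) v = \sum_(i < s) F i v.
    apply: eq_bigr => i _; rewrite /F'' /= ltn_ord.
    have -> : insubd d0 (val i) = i by apply: val_inj; rewrite val_insubd ltn_ord.
    by case: ifP => // /inVK /=; rewrite vK.
  exact: Fk.
have uR1'' : uniq R1''.
  by rewrite map_inj_uniq // => x y E; rewrite -(backK x) -(backK y) E.
have dR1'' : DPF_coloring H'' F'' VK R1''.
  split => //.
  - by move=> x /mapP [y yR ->]; exact: inVK.
  - by move=> v vK; rewrite count_map -(cnt1 v vK).
  - move=> p x q E.
    have : x \in R1'' by rewrite E mem_cat inE eqxx orbT.
    case/mapP => [[v c] x0R Ex]; subst x.
    rewrite /F'' /= ltn_ord.
    have -> : insubd d0 (val c) = c by apply: val_inj; rewrite val_insubd ltn_ord.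
    rewrite x0R ltnS leqn0 eqn0Ngt -has_count; apply/hasPn => y yp.
    have : y \in R1'' by rewrite E mem_cat yp.
    case/mapP => y0 y0R ->.
    rewrite /H'' !embold /= !backK x0R y0R /=.
    case: (eqVneq v y0.1) => [E1|ne]; last by rewrite andbF.
    rewrite andbT.
    have -> : (v, c) = y0 by apply: (fibre_eq uR1 cnt1) => //; exact: inVK.
    by rewrite irrH.
have [R2 [[uR2 _ cnt2 deg2] subR]] := Hyp s.+1 H'' F'' (ltn0Sn s) cov'' F''k R1'' dR1''.
have old2 : forall y, y \in R2 -> val y.2 < s.
  move=> y yR; rewrite ltnNge; apply/negP => ys.
  case: (boolP (y.1 \in VK)) => yK.
    have : has (fun x => x.1 == y.1) R1 by rewrite has_count cnt1.
    case/hasP => r rR /eqP r1.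
    have erR : emb r \in R2 by apply: subR; apply: map_f.
    have := fibre_eq uR2 cnt2 erR yR (in_setT _) r1 => Er.
    by move: ys; rewrite -Er /= leqNgt ltn_ord.
  case: (split_ex yR) => p [q E].
  have := deg2 _ _ _ E.
  have -> : F'' y.2 y.1 = 0.
    rewrite /F''; have -> : (val y.2 < s) = false by rewrite ltnNge ys.
    by rewrite (negbTE yK).
  by rewrite ltn0.
pose a := fun y => y \in R1''.
pose S' := filter (predC a) R2.
pose M := map back S'.
have backnot : forall y, y \in R2 -> y \notin R1'' -> back y \notin R1.
  move=> y yR yn; apply/negP => h; move/negP: yn; apply.
  by rewrite -(embK _ (old2 _ yR)); apply: map_f.
have bef : forall r y, r \in R1 -> y \in R2 -> y \notin R1'' -> H r (back y) ->
    index (emb r) R2 < index y R2.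
  move=> r y rR yR yn hr.
  have erR : emb r \in R2 by apply: subR; apply: map_f.
  case: (split_ex erR) => p [q E].
  have := deg2 _ _ _ E.
  have -> : F'' (emb r).2 (emb r).1 = 1.
    rewrite /F'' /= ltn_ord.
    have -> : insubd d0 (val r.2) = r.2 by apply: val_inj; rewrite val_insubd ltn_ord.
    by rewrite -surjective_pairing rR.
  move=> c1.
  have hy : H'' (emb r) y.
    rewrite /H'' embold (old2 _ yR) /= backK hr /=.
    by rewrite (negbTE (backnot _ yR yn)) andbF.
  have ynp : y \notin p.
    apply/negP => yp; move: c1; rewrite ltnS leqn0 eqn0Ngt -has_count.
    by move/hasPn/(_ y yp); rewrite hy.
  have eny : emb r != y by apply/eqP => Ey; move/negP: yn; apply; rewrite -Ey map_f.
  have h1 : index (emb r) (p ++ emb r :: q) <= size p.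
    rewrite index_cat; case: ifP => [ep|_]; first by rewrite ltnW // index_mem.
    by rewrite /= eqxx addn0.
  rewrite E; apply: leq_ltn_trans h1 _.
  by rewrite index_cat (negbTE ynp) /= (negbTE eny) addnS ltnS leq_addr.
have backinj : {in S' &, injective back}.
  move=> x y; rewrite !mem_filter => /andP [_ xR] /andP [_ yR] E.
  by rewrite -(embK _ (old2 _ xR)) -(embK _ (old2 _ yR)) E.
have uS : uniq (R1 ++ M).
  rewrite cat_uniq uR1 /= (map_inj_in_uniq backinj) filter_uniq // andbT.
  apply/hasPn => z /mapP [y]; rewrite mem_filter => /andP [yn yR] ->.
  exact: backnot.
exists (R1 ++ M); split; last by rewrite take_size_cat // perm_refl.
split => //.
- by move=> x _; rewrite in_setT.
- move=> v _.
  have := cnt2 v (in_setT v); rewrite (count_split _ a) => <-.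
  rewrite count_cat count_map; congr (_ + _).
  have pe : perm_eq (filter a R2) R1''.
    apply: uniq_perm; rewrite ?filter_uniq // => z; rewrite mem_filter /a.
    by case zR: (z \in R1'') => //=; rewrite subR.
  by rewrite (permP pe) count_map.
- move=> p x q E.
  rewrite (count_bef _ uS E) count_cat.
  have xS : x \in R1 ++ M by rewrite E mem_cat inE eqxx orbT.
  case xR1 : (x \in R1).
  + have ix : index x (R1 ++ M) = index x R1 by rewrite index_cat xR1.
    have -> : count (fun z => H x z && (index z (R1 ++ M) < index x (R1 ++ M))) M = 0.
      apply/eqP; rewrite -leqn0 leqNgt -has_count; apply/hasPn => z zM /=.
      rewrite ix index_cat.
      have -> : (z \in R1) = false.
        apply/negP => zR; move: uS; rewrite cat_uniq => /and3P [_ /hasPn /(_ z zM) /=].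
        by rewrite zR.
      have lt : index x R1 <= size R1 + index z M.
        by rewrite (leq_trans _ (leq_addr _ _)) // ltnW // index_mem.
      by rewrite ltnNge lt andbF.
    rewrite addn0.
    have -> : count (fun z => H x z && (index z (R1 ++ M) < index x (R1 ++ M))) R1 =
              count (fun z => H x z && (index z R1 < index x R1)) R1.
      by apply: eq_in_count => z zR /=; rewrite ix index_cat zR.
    case: (split_ex xR1) => p1 [q1 E1].
    by rewrite -(count_bef _ uR1 E1); apply: deg1 E1.
  + have xM : x \in M by move: xS; rewrite mem_cat xR1.
    case/mapP: xM => y yS' Ex; subst x.
    have := yS'; rewrite mem_filter => /andP [yn yR].
    have yold := old2 _ yR.
    have bn := backnot _ yR yn.
    have ix : index (back y) (R1 ++ M) = size R1 + index (back y) M.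
      by rewrite index_cat (negbTE bn).
    have -> : count (fun z => H (back y) z && (index z (R1 ++ M) < index (back y) (R1 ++ M))) R1
              = count (H (back y)) R1.
      apply: eq_in_count => z zR /=; rewrite ix index_cat zR.
      by rewrite (leq_trans _ (leq_addr _ _)) ?andbT // index_mem.
    have -> : count (fun z => H (back y) z && (index z (R1 ++ M) < index (back y) (R1 ++ M))) M
              = count (fun w => H'' y w && (index w R2 < index y R2)) S'.
      rewrite count_map; apply: eq_in_count => w wS' /=.
      have := wS'; rewrite mem_filter => /andP [wn wR].
      rewrite ix index_cat.
      have -> : (back w \in R1) = false by apply/negbTE/backnot.
      rewrite ltn_add2l /M !idx_map // idx_filter ?filter_uniq //.
      by rewrite /H'' yold (old2 _ wR) /= (negbTE bn) /= andbT.
    case: (split_ex yR) => p2 [q2 E2].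
    have := deg2 _ _ _ E2; rewrite (count_bef _ uR2 E2).
    have -> : F'' y.2 y.1 = F (back y).2 (back y).1.
      by rewrite /F'' yold -[(y.1, _)]/(back y) (negbTE bn).
    apply: leq_ltn_trans.
    rewrite (count_split _ a R2) leq_add2r.
    have pe : perm_eq (filter a R2) R1''.
      apply: uniq_perm; rewrite ?filter_uniq // => z; rewrite mem_filter /a.
      by case zR: (z \in R1'') => //=; rewrite subR.
    rewrite (permP pe) count_map; apply/eq_leq/eq_in_count => r rR /=.
    rewrite /H'' yold embold /= backK (negbTE bn) /= andbT.
    case hr: (H (back y) r) => //=; symmetry.
    by apply: bef => //; rewrite symH.
Qed.
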